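(* The intersection graph $G$ of $n$ objects in the plane, each of which is either a horizontal line segment or a vertical line, admits a $3$-hop spanner $\widehat{G}$ with $O(n)$ edges.
   Context: The intersection graph has the objects as vertices, with an edge iff the two objects intersect. For a graph $G$ and integer $t\ge1$, a $t$-hop spanner is a subgraph $\widehat{G}$ of $G$ on the same vertex set such that for every edge $uv\in E(G)$ there is a $u$–$v$ path in $\widehat{G}$ with at most $t$ edges. *)

(* Defs.v *)
From HB Require Import structures.
From mathcomp Require Import all_boot all_order all_algebra.

From Stdlib Require Import Reals.
Set Implicit Arguments. Unset Strict Implicit. Unset Printing Implicit Defensive.
Import Order.TTheory GRing.Theory Num.Theory.

Definition point := (Rdefinitions.R * Rdefinitions.R)%type.

Inductive obj :=
| HSeg (x1 x2 y : Rdefinitions.R)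
| VLine (c : Rdefinitions.R).

Definition on_obj (o : obj) (p : point) : Prop :=
  match o with
  | HSeg x1 x2 y => p.2 = y /\ ((Rmin x1 x2 <= p.1)%R /\ (p.1 <= Rmax x1 x2)%R)
  | VLine c => p.1 = c
  end.

Definition intersect (o1 o2 : obj) : Prop :=
  exists p : point, on_obj o1 p /\ on_obj o2 p.

Definition inter_graph (n : nat) (O : 'I_n -> obj) (i j : 'I_n) : Prop :=
  i != j /\ intersect (O i) (O j).

Definition is_hop_spanner (V : finType) (G : V -> V -> Prop) (H : rel V)
    (t : nat) : Prop :=
  (forall u v, H u v -> H v u) /\
  (forall u v, H u v -> G u v) /\
  (forall u v, G u v ->
     exists s : seq V, [/\ path H u s, last u s = v & size s <= t]).

Definition num_edges (n : nat) (H : rel 'I_n) : nat :=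
  #|[set p : 'I_n * 'I_n | H p.1 p.2 && (p.1 < p.2)%N]|.

(* Main.v *)
Require Import Defs.
From Stdlib Require Import Reals Lra ClassicalEpsilon.
From mathcomp Require Import all_boot all_order all_algebra.
Set Implicit Arguments. Unset Strict Implicit. Unset Printing Implicit Defensive.

Section Helpers.
Local Open Scope R_scope.

Definition pb (P : Prop) : bool := if excluded_middle_informative P then true else false.
Lemma pbP (P : Prop) : reflect P (pb P).
Proof. rewrite /pb; case: excluded_middle_informative => h; by constructor. Qed.

Lemma fchoice (A B : Type) (P : A -> B -> Prop) :
  (forall a, exists b, P a b) -> exists f : A -> B, forall a, P a (f a).
Proof.
move=> H; exists (fun a => proj1_sig (constructive_indefinite_description _ (H a))).
by move=> a; case: (constructive_indefinite_description _ (H a)).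
Qed.

Lemma exminn (T : finType) (P : pred T) (F : T -> nat) x0 :
  P x0 -> exists2 x, P x & forall y, P y -> (F x <= F y)%nat.
Proof. move=> H; case: (@arg_minnP T x0 P F H) => x Px Hm; by exists x. Qed.
Lemma exmaxn (T : finType) (P : pred T) (F : T -> nat) x0 :
  P x0 -> exists2 x, P x & forall y, P y -> (F y <= F x)%nat.
Proof. move=> H; case: (@arg_maxnP T x0 P F H) => x Px Hm; by exists x. Qed.

Lemma seq_minR (T : eqType) (s : seq T) (f : T -> R) :
  s <> [::] -> exists2 x, x \in s & forall y, y \in s -> f x <= f y.
Proof.
elim: s => [//|a s IH] _.
case: s IH => [|b s] IH.
  exists a; first by rewrite inE eqxx.
  by move=> y; rewrite inE => /eqP ->; lra.
have [m ms Hm] := IH ltac:(discriminate).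
case: (Rle_dec (f a) (f m)) => h.
  exists a; first by rewrite inE eqxx.
  move=> y; rewrite inE => /orP [/eqP ->|/Hm]; lra.
exists m; first by rewrite inE ms orbT.
move=> y; rewrite inE => /orP [/eqP ->|/Hm]; lra.
Qed.

Lemma set_minR (T : finType) (A : {set T}) (f : T -> R) :
  A != set0 -> exists2 x, x \in A & forall y, y \in A -> f x <= f y.
Proof.
move=> /set0Pn [a aA].
have : enum A <> [::] by move=> E; have := mem_enum A a; rewrite E aA.
case/(seq_minR f) => x; rewrite mem_enum => xA H; exists x => // y yA.
by apply: H; rewrite mem_enum.
Qed.

Lemma set_maxR (T : finType) (A : {set T}) (f : T -> R) :
  A != set0 -> exists2 x, x \in A & forall y, y \in A -> f y <= f x.
Proof.
move=> /(set_minR (fun x => - f x)) [x xA H]; exists x => // y /H; lra.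
Qed.


Section Abs.
Variable n : nat.
Local Notation V := 'I_n.
Variables (isI isP : pred V) (lo hi c K : V -> R).

Definition hit (s x : V) : Prop :=
  isI s /\ isP x /\ K s = K x /\ lo s <= c x /\ c x <= hi s.
Definition hs s : {set V} := [set x | pb (hit s x)].
Lemma hsP s x : reflect (hit s x) (x \in hs s).
Proof. rewrite inE; exact: pbP. Qed.

Definition Mx m := isI m &&
  [forall t, (isI t && (hs m \subset hs t)) ==> (hs t \subset hs m)].

Lemma MxP m t : Mx m -> isI t -> hs m \subset hs t -> hs t \subset hs m.
Proof. by case/andP=> _ /forallP /(_ t) /implyP H it st; apply: H; rewrite it st. Qed.

Lemma exists_max s : isI s -> exists2 m, Mx m & hs s \subset hs m.
Proof.
move=> iss.
have [m /andP [im sm] Hm] := @exmaxn _ [pred t | isI t && (hs s \subset hs t)]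
   (fun t : V => #|hs t|%nat) s ltac:(by rewrite /= iss subxx).
exists m => //; rewrite /Mx im; apply/forallP => t; apply/implyP => /andP [it mt].
have le := Hm t ltac:(by rewrite /= it (subset_trans sm mt)).
have : hs m == hs t by rewrite eqEcard mt le.
by move/eqP ->.
Qed.

Definition Stab (P : {set V}) :=
  [forall m, (Mx m && (hs m != set0)) ==> (hs m :&: P != set0)].

Lemma StabT : Stab setT.
Proof. by apply/forallP => m; apply/implyP => /andP [_]; rewrite setIT. Qed.

Lemma P0_ex : exists2 P0, Stab P0 & forall Q, Stab Q -> (#|P0| <= #|Q|)%nat.
Proof. exact: (@exminn _ Stab (fun P => #|P|) setT StabT). Qed.

Section WithP.
Variable P0 : {set V}.
Hypothesis P0s : Stab P0.
Hypothesis P0m : forall Q, Stab Q -> (#|P0| <= #|Q|)%nat.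

Lemma three m p1 p2 p3 : Mx m -> p1 \in P0 -> p2 \in P0 -> p3 \in P0 ->
  hit m p1 -> hit m p2 -> hit m p3 -> c p1 <= c p2 -> c p2 <= c p3 ->
  p2 = p1 \/ p2 = p3.
Proof.
move=> Mm P1 P2 P3 h1 h2 h3 l12 l23.
case: (eqVneq p2 p1) => [-> | n1]; first by left.
case: (eqVneq p2 p3) => [-> | n3]; first by right.
exfalso.
have St : Stab (P0 :\ p2).
  apply/forallP => nu; apply/implyP => /andP [Mnu ne].
  have := forallP P0s nu; rewrite Mnu ne /= => /set0Pn [q /setIP [qn qP]].
  case: (eqVneq q p2) => [eq2 | nq].
  - subst q.
    case: (boolP (p1 \in hs nu)) => [p1n | p1n].
      by apply/set0Pn; exists p1; rewrite in_setI p1n in_setD1 P1 eq_sym n1.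
    case: (boolP (p3 \in hs nu)) => [p3n | p3n].
      by apply/set0Pn; exists p3; rewrite in_setI p3n in_setD1 P3 eq_sym n3.
    have sub : hs nu \subset hs m.
      apply/subsetP => w /hsP [inu [pw [Kw [lw hw]]]].
      move/hsP: qn => [_ [_ [K2 [lq hq]]]].
      move: h1 h2 h3 => [im [ip1 [K1 [l1 hh1]]]] [_ [ip2 [K2' [l2 hh2]]]]
                         [_ [ip3 [K3 [l3 hh3]]]].
      have a1 : c p1 < lo nu.
        case: (Rlt_le_dec (c p1) (lo nu)) => // h.
        move/negP: p1n; case; apply/hsP; split=> //; split=> //; split.
          by rewrite K2 -K2' K1.
        split=> //; lra.
      have a3 : hi nu < c p3.
        case: (Rlt_le_dec (hi nu) (c p3)) => // h.
        move/negP: p3n; case; apply/hsP; split=> //; split=> //; split.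
          by rewrite K2 -K2' K3.
        split=> //; lra.
      apply/hsP; split=> //; split=> //; split; first by rewrite K2' -K2 Kw.
      split; lra.
    have := MxP Mnu (proj1 h1) sub => /subsetP /(_ p1) .
    by move/(_ (introT (hsP _ _) h1)); rewrite (negbTE p1n).
  - by apply/set0Pn; exists q; rewrite in_setI qn in_setD1 qP nq.
have := P0m St; rewrite (cardsD1 p2 P0) P2 /=.
by rewrite ltnn.
Qed.

Lemma card_le2 (A : {set V}) m : Mx m -> A \subset P0 ->
  (forall q, q \in A -> hit m q) -> (#|A| <= 2)%nat.
Proof.
move=> Mm AP H.
case: (eqVneq A set0) => [-> | ne]; first by rewrite cards0.
have [a aA Ha] := set_minR c ne.
have [b bA Hb] := set_maxR c ne.
have sub : A \subset [set a; b].
  apply/subsetP => q qA; rewrite !inE.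
  have := three Mm (subsetP AP _ aA) (subsetP AP _ qA) (subsetP AP _ bA)
    (H _ aA) (H _ qA) (H _ bA) (Ha _ qA) (Hb _ qA).
  by case=> ->; rewrite eqxx ?orbT.
apply: leq_trans (subset_leq_card sub) _.
by rewrite cards2; case: (a != b).
Qed.

Definition AL (Lh : V -> V) w := [set p in P0 |
  [&& Mx (Lh p), pb (hit (Lh p) p), pb (hit (Lh p) w) & pb (c w <= c p)]].
Definition AR (Rh : V -> V) w := [set p in P0 |
  [&& Mx (Rh p), pb (hit (Rh p) p), pb (hit (Rh p) w) & pb (c p <= c w)]].

Lemma ALP Lh w p : reflect [/\ p \in P0, Mx (Lh p), hit (Lh p) p, hit (Lh p) w & c w <= c p]
  (p \in AL Lh w).
Proof.
rewrite inE; apply: (iffP andP).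
  by case=> pP /and4P [a /pbP b /pbP d /pbP e].
case=> a b d e f; split=> //; apply/and4P; split=> //; exact/pbP.
Qed.

Lemma ARP Rh w p : reflect [/\ p \in P0, Mx (Rh p), hit (Rh p) p, hit (Rh p) w & c p <= c w]
  (p \in AR Rh w).
Proof.
rewrite inE; apply: (iffP andP).
  by case=> pP /and4P [a /pbP b /pbP d /pbP e].
case=> a b d e f; split=> //; apply/and4P; split=> //; exact/pbP.
Qed.

Lemma ALcard Lh w : (#|AL Lh w| <= 2)%nat.
Proof.
case: (eqVneq (AL Lh w) set0) => [-> | ne]; first by rewrite cards0.
have [p3 p3A Hp3] := set_maxR c ne.
case/ALP: (p3A) => _ M3 h33 h3w _.
apply: (card_le2 M3).
  by apply/subsetP => q /ALP [].
move=> q qA; have := Hp3 _ qA; case/ALP: qA => _ _ hqq hqw cwq cq3.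
move: h33 h3w hqq hqw => [i3 [_ [K33 [l33 hh33]]]] [_ [_ [K3w [l3w h3w]]]]
  [_ [pq [Kqq _]]] [_ [_ [Kqw _]]].
split=> //; split=> //; split; first by rewrite K3w -Kqw Kqq.
split; lra.
Qed.

Lemma ARcard Rh w : (#|AR Rh w| <= 2)%nat.
Proof.
case: (eqVneq (AR Rh w) set0) => [-> | ne]; first by rewrite cards0.
have [p1 p1A Hp1] := set_minR c ne.
case/ARP: (p1A) => _ M1 h11 h1w _.
apply: (card_le2 M1).
  by apply/subsetP => q /ARP [].
move=> q qA; have := Hp1 _ qA; case/ARP: qA => _ _ hqq hqw cqw c1q.
move: h11 h1w hqq hqw => [i1 [_ [K11 [l11 hh11]]]] [_ [_ [K1w [l1w h1w]]]]
  [_ [pq [Kqq _]]] [_ [_ [Kqw _]]].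
split=> //; split=> //; split; first by rewrite K1w -Kqw Kqq.
split; lra.
Qed.

Definition Erel (F : V -> {set V}) a b := b \in F a \/ a \in F b.
Definition walk3 (E : V -> V -> Prop) s v := exists a b,
  [/\ s = a \/ E s a, a = b \/ E a b & b = v \/ E b v].

Lemma abs_main : exists F : V -> {set V},
  [/\ forall v, (#|F v| <= 6)%nat,
      forall v y, y \in F v -> hit v y \/ hit y v &
      forall s x, hit s x -> walk3 (Erel F) s x].
Proof.
have hubL : forall p, exists L, (exists m, Mx m /\ hit m p) ->
    [/\ Mx L, hit L p & forall m, Mx m -> hit m p -> lo L <= lo m].
  move=> p; case: (excluded_middle_informative (exists m, Mx m /\ hit m p)) =>
    [[m0 [M0 h0]] | nex]; last by exists p.
  have ne : [set m | Mx m && pb (hit m p)] != set0.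
    by apply/set0Pn; exists m0; rewrite inE M0; apply/pbP.
  have [L LA HL] := set_minR lo ne.
  exists L => _; move: LA; rewrite inE => /andP [ML /pbP hL]; split=> // m Mm hm.
  by apply: HL; rewrite inE Mm; apply/pbP.
have hubR : forall p, exists L, (exists m, Mx m /\ hit m p) ->
    [/\ Mx L, hit L p & forall m, Mx m -> hit m p -> hi m <= hi L].
  move=> p; case: (excluded_middle_informative (exists m, Mx m /\ hit m p)) =>
    [[m0 [M0 h0]] | nex]; last by exists p.
  have ne : [set m | Mx m && pb (hit m p)] != set0.
    by apply/set0Pn; exists m0; rewrite inE M0; apply/pbP.
  have [L LA HL] := set_maxR hi ne.
  exists L => _; move: LA; rewrite inE => /andP [ML /pbP hL]; split=> // m Mm hm.
  by apply: HL; rewrite inE Mm; apply/pbP.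
have sel : forall s, exists t : V * V * V, (isI s /\ hs s != set0) ->
    [/\ Mx t.1.1, hs s \subset hs t.1.1, t.1.2 \in P0, hit t.1.1 t.1.2 & hit s t.2].
  move=> s; case: (excluded_middle_informative (isI s /\ hs s != set0)) =>
    [[is0 ne] | nex]; last by exists (s, s, s).
  have [m Mm sm] := exists_max is0.
  have /set0Pn [x xs] := ne.
  have : hs m != set0 by apply/set0Pn; exists x; exact: (subsetP sm).
  move=> nem; have := forallP P0s m; rewrite Mm nem /= => /set0Pn [p /setIP [pm pP]].
  exists (m, p, x) => _ /=; split=> //; exact/hsP.
have [Lh HLh] := fchoice hubL.
have [Rh HRh] := fchoice hubR.
have [sl Hsl] := fchoice sel.
pose F1 s := hs s :&: [set (sl s).2; (sl s).1.2].
exists (fun v => F1 v :|: (Lh @: AL Lh v) :|: (Rh @: AR Rh v)); split.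
- move=> v.
  apply: leq_trans (leq_card_setU _ _).1 _.
  apply: leq_trans (leq_add (leq_card_setU _ _).1 (leqnn _)) _.
  have h1 : (#|F1 v| <= 2)%nat.
    apply: leq_trans (subset_leq_card (subsetIr _ _)) _.
    by rewrite cards2; case: (_ != _).
  have h2 := leq_trans (leq_imset_card Lh (AL Lh v)) (ALcard Lh v).
  have h3 := leq_trans (leq_imset_card Rh (AR Rh v)) (ARcard Rh v).
  by rewrite -!addnA (leq_add h1 (leq_add h2 h3)).
- move=> v y; rewrite !inE -!orbA => /or3P [/andP [/pbP h _] | | ].
  + by left.
  + by case/imsetP => p /ALP [_ _ _ h _] ->; right.
  + by case/imsetP => p /ARP [_ _ _ h _] ->; right.
- move=> s v hsv.
  have ne : hs s != set0 by apply/set0Pn; exists v; exact/hsP.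
  case: (Hsl s (conj (proj1 hsv) ne)).
  set m := (sl s).1.1; set p := (sl s).1.2; set x := (sl s).2.
  move=> Mm sm pP hmp hsx.
  have hmv : hit m v by apply/hsP; apply: (subsetP sm); apply/hsP.
  have exm : exists m, Mx m /\ hit m p by exists m.
  have [ML hLp HL] := HLh p exm.
  have [MR hRp HR] := HRh p exm.
  have LlM := HL m Mm hmp.
  have RhM := HR m Mm hmp.
  have inF : forall a b, b \in F1 a :|: (Lh @: AL Lh a) :|: (Rh @: AR Rh a) ->
     Erel (fun v => F1 v :|: (Lh @: AL Lh v) :|: (Rh @: AR Rh v)) a b.
    by move=> a b h; left.
  have inF' : forall a b, a \in F1 b :|: (Lh @: AL Lh b) :|: (Rh @: AR Rh b) ->
     Erel (fun v => F1 v :|: (Lh @: AL Lh v) :|: (Rh @: AR Rh v)) a b.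
    by move=> a b h; right.
  have F1x : x \in F1 s by rewrite /F1 in_setI !inE eqxx; apply/andP; split=> //; exact/pbP.
  have F1p : hit s p -> p \in F1 s.
    by move=> h; rewrite /F1 in_setI !inE eqxx orbT andbT; apply/pbP.
  have hLp0 := hLp; have hRp0 := hRp.
  move: hsv hmv hmp hsx hLp hRp => [is0 [pv [Ksv [lsv hsv]]]] [im [_ [Kmv [lmv hmv]]]]
     [_ [pp [Kmp [lmp hmp]]]] [_ [px [Ksx [lsx hsx]]]]
     [iL [_ [KLp [lLp hLp]]]] [iR [_ [KRp [lRp hRp]]]].
  have hmx : hit m x by apply/hsP; apply: (subsetP sm); apply/hsP.
  case: hmx => _ [_ [Kmx [lmx hmx]]].
  case: (Rle_dec (c v) (c p)) => cvp.
  +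
    have hLv : hit (Lh p) v.
      split=> //; split=> //; split; first by rewrite KLp -Kmp Kmv.
      split; lra.
    have vA : p \in AL Lh v by apply/ALP; split=> //.
    have Lv : (Lh p) \in F1 v :|: (Lh @: AL Lh v) :|: (Rh @: AR Rh v).
      by rewrite !in_setU (imset_f Lh vA) orbT.
    case: (excluded_middle_informative (hit s p)) => hsp.
    * have pA : p \in AL Lh p by apply/ALP; split=> //; lra.
      have Lp : (Lh p) \in F1 p :|: (Lh @: AL Lh p) :|: (Rh @: AR Rh p).
        by rewrite !in_setU (imset_f Lh pA) orbT.
      exists p, (Lh p); split; right.
      -- by apply: inF; rewrite !in_setU F1p.
      -- exact: inF.
      -- exact: inF'.
    * have cxp : c x < c p.
        case: (Rlt_le_dec (c x) (c p)) => // h; exfalso; apply: hsp.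
        split=> //; split=> //; split; first by rewrite Ksv -Kmv Kmp.
        split; lra.
      have hLx : hit (Lh p) x.
        split=> //; split=> //; split; first by rewrite KLp -Kmp Kmx.
        split; lra.
      have xA : p \in AL Lh x by apply/ALP; split=> //; lra.
      have Lx : (Lh p) \in F1 x :|: (Lh @: AL Lh x) :|: (Rh @: AR Rh x).
        by rewrite !in_setU (imset_f Lh xA) orbT.
      exists x, (Lh p); split; right.
      -- by apply: inF; rewrite !in_setU F1x.
      -- exact: inF.
      -- exact: inF'.
  +
    have cpv : c p <= c v by lra.
    have hLv : hit (Rh p) v.
      split=> //; split=> //; split; first by rewrite KRp -Kmp Kmv.
      split; lra.
    have vA : p \in AR Rh v by apply/ARP; split=> //.
    have Lv : (Rh p) \in F1 v :|: (Lh @: AL Lh v) :|: (Rh @: AR Rh v).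
      by rewrite !in_setU (imset_f Rh vA) orbT.
    case: (excluded_middle_informative (hit s p)) => hsp.
    * have pA : p \in AR Rh p by apply/ARP; split=> //; lra.
      have Lp : (Rh p) \in F1 p :|: (Lh @: AL Lh p) :|: (Rh @: AR Rh p).
        by rewrite !in_setU (imset_f Rh pA) orbT.
      exists p, (Rh p); split; right.
      -- by apply: inF; rewrite !in_setU F1p.
      -- exact: inF.
      -- exact: inF'.
    * have cxp : c p < c x.
        case: (Rlt_le_dec (c p) (c x)) => // h; exfalso; apply: hsp.
        split=> //; split=> //; split; first by rewrite Ksv -Kmv Kmp.
        split; lra.
      have hLx : hit (Rh p) x.
        split=> //; split=> //; split; first by rewrite KRp -Kmp Kmx.
        split; lra.
      have xA : p \in AR Rh x by apply/ARP; split=> //; lra.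
      have Lx : (Rh p) \in F1 x :|: (Lh @: AL Lh x) :|: (Rh @: AR Rh x).
        by rewrite !in_setU (imset_f Rh xA) orbT.
      exists x, (Rh p); split; right.
      -- by apply: inF; rewrite !in_setU F1x.
      -- exact: inF.
      -- exact: inF'.
Qed.

End WithP.
End Abs.


Lemma abs n (isI isP : pred 'I_n) (lo hi c K : 'I_n -> R) :
  exists F : 'I_n -> {set 'I_n},
  [/\ forall v, (#|F v| <= 6)%nat,
      forall v y, y \in F v -> hit isI isP lo hi c K v y \/ hit isI isP lo hi c K y v &
      forall s x, hit isI isP lo hi c K s x -> walk3 (Erel F) s x].
Proof.
have [P0 P0s P0m] := P0_ex isI isP lo hi c K.
exact: abs_main P0s P0m.
Qed.

Lemma ext_path (T : eqType) (r : rel T) u s w :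
  path r u s -> (last u s = w \/ r (last u s) w) ->
  exists s', [/\ path r u s', last u s' = w & (size s' <= (size s).+1)%nat].
Proof.
move=> ps [<- | h]; first by exists s; split=> //; apply: leqnSn.
exists (rcons s w); split.
- by rewrite rcons_path ps h.
- by rewrite last_rcons.
- by rewrite size_rcons.
Qed.

Definition isH (o : obj) := if o is HSeg _ _ _ then true else false.
Definition isVl (o : obj) := if o is VLine _ then true else false.
Definition loO (o : obj) := match o with HSeg x1 x2 _ => Rmin x1 x2 | VLine c => c end.
Definition hiO (o : obj) := match o with HSeg x1 x2 _ => Rmax x1 x2 | VLine c => c end.
Definition yO (o : obj) := match o with HSeg _ _ y => y | VLine _ => 0 end.
Definition cvO (o : obj) := match o with HSeg x1 _ _ => x1 | VLine c => c end.

Lemma inter_sym a b : intersect a b -> intersect b a.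
Proof. by case=> p [h1 h2]; exists p. Qed.

Lemma Rmin_le_max a b : Rmin a b <= Rmax a b.
Proof. apply: Rle_trans (Rmin_l a b) (Rmax_l a b). Qed.

Section Main.
Variable n : nat.
Variable O : 'I_n -> obj.
Local Notation V := 'I_n.

Definition hitHV := hit (fun i : V => isH (O i)) (fun i => isVl (O i))
   (fun i => loO (O i)) (fun i => hiO (O i)) (fun i => cvO (O i)) (fun _ => 0).
Definition hitHH := hit (fun i : V => isH (O i)) (fun i => isH (O i))
   (fun i => loO (O i)) (fun i => hiO (O i)) (fun i => loO (O i)) (fun i => yO (O i)).

Lemma hitHV_int s x : hitHV s x -> intersect (O s) (O x).
Proof.
rewrite /hitHV /hit => -[iS [pX [_ [l h]]]].
move: iS pX l h; case: (O s) => [x1 x2 y|c1] //; case: (O x) => [x1' x2' y'|c2] //=.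
by move=> _ _ l h; exists (c2, y); split.
Qed.

Lemma hitHH_int s x : hitHH s x -> intersect (O s) (O x).
Proof.
rewrite /hitHH /hit => -[iS [pX [Ky [l h]]]].
move: iS pX Ky l h; case: (O s) => [x1 x2 y|c1] //; case: (O x) => [x1' x2' y'|c2] //=.
move=> _ _ Ky l h; exists (Rmin x1' x2', y); rewrite /on_obj /=.
split; first by split.
split; first by [].
split; [exact: Rle_refl | exact: Rmin_le_max].
Qed.

Lemma int_HV s x x1 x2 y cc : O s = HSeg x1 x2 y -> O x = VLine cc ->
  intersect (O s) (O x) -> hitHV s x.
Proof.
move=> Es Ex; rewrite Es Ex => [[p [[_ [l h]] /= e]]].
rewrite /hitHV /hit Es Ex /=; subst cc; do 3 (split=> //).
Qed.

Lemma int_HH s x x1 x2 y x1' x2' y' : O s = HSeg x1 x2 y -> O x = HSeg x1' x2' y' ->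
  intersect (O s) (O x) -> hitHH s x \/ hitHH x s.
Proof.
move=> Es Ex; rewrite Es Ex => [[p [[e1 [l1 h1]] [e2 [l2 h2]]]]].
rewrite /hitHH /hit Es Ex /=.
case: (Rle_dec (Rmin x1 x2) (Rmin x1' x2')) => h.
- left; do 2 (split=> //); split; first by rewrite -e1 -e2.
  split=> //; lra.
- right; do 2 (split=> //); split; first by rewrite -e1 -e2.
  split; lra.
Qed.

Definition stepF (F : V -> {set V}) a b := a = b \/ b \in F a \/ a \in F b.

Lemma walk_path (F : V -> {set V}) u v a b :
  stepF F u a -> stepF F a b -> stepF F b v ->
  exists s : seq V, [/\ path [rel i j | (i != j) && ((j \in F i) || (i \in F j))] u s,
     last u s = v & (size s <= 3)%nat].
Proof.
set r := [rel i j | _].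
have st : forall x y, stepF F x y -> x = y \/ r x y.
  move=> x y [-> | h]; first by left.
  case: (eqVneq x y) => [-> | ne]; first by left.
  by right; rewrite /r /= ne; case: h => ->; rewrite ?orbT.
move=> /st h1 /st h2 /st h3.
have [s1 [p1 l1 z1]] := @ext_path _ r u [::] a isT h1.
have [s2 [p2 l2 z2]] := @ext_path _ r u s1 b p1 ltac:(by rewrite l1).
have [s3 [p3 l3 z3]] := @ext_path _ r u s2 v p2 ltac:(by rewrite l2).
exists s3; split=> //.
apply: (leq_trans z3); rewrite ltnS; apply: (leq_trans z2); rewrite ltnS; exact: z1.
Qed.

Lemma spanner_ex : exists H : rel V,
  is_hop_spanner (inter_graph O) H 3 /\ (num_edges H <= 26 * n)%nat.
Proof.
have [F1 [c1 h1 w1]] := abs (fun i : V => isH (O i)) (fun i => isVl (O i))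
   (fun i => loO (O i)) (fun i => hiO (O i)) (fun i => cvO (O i)) (fun _ => 0).
have [F2 [c2 h2 w2]] := abs (fun i : V => isH (O i)) (fun i => isH (O i))
   (fun i => loO (O i)) (fun i => hiO (O i)) (fun i => loO (O i)) (fun i => yO (O i)).
pose VS w := [set j | isVl (O j) && pb (cvO (O j) = cvO (O w))].
pose rep w := odflt w [pick j in VS w].
pose F3 w := if isVl (O w) then [set rep w] else set0.
pose F i := F1 i :|: F2 i :|: F3 i.
have rep_in : forall w, isVl (O w) -> rep w \in VS w.
  move=> w vw; rewrite /rep; case: pickP => [x -> // | H].
  by move: (H w); rewrite inE vw /=; case/negP; apply/pbP.
have Fint : forall i j, j \in F i -> intersect (O i) (O j).
  move=> i j; rewrite !in_setU -orbA => /or3P [/h1 | /h2 | ].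
  - by case=> [/hitHV_int | /hitHV_int /inter_sym].
  - by case=> [/hitHH_int | /hitHH_int /inter_sym].
  - rewrite /F3; case vi: (isVl (O i)); last by rewrite inE.
    rewrite inE => /eqP ->; move: (rep_in i vi); rewrite inE => /andP [vr /pbP e].
    move: vi vr e; case: (O i) => [? ? ?|ci] //; case: (O (rep i)) => [? ? ?|cr] //= _ _ e.
    by exists (ci, 0); rewrite /on_obj /=.
have c3 : forall v, (#|F3 v| <= 1)%nat.
  by move=> v; rewrite /F3; case: (isVl _); rewrite ?cards1 ?cards0.
have cF : forall v, (#|F v| <= 13)%nat.
  move=> v; apply: leq_trans (leq_card_setU _ _).1 _.
  apply: leq_trans (leq_add (leq_card_setU _ _).1 (leqnn _)) _.
  by rewrite -!addnA (leq_add (c1 v) (leq_add (c2 v) (c3 v))).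
exists [rel i j | (i != j) && ((j \in F i) || (i \in F j))]; split; [split; [ | split] | ].
- by move=> u v /= /andP [ne h]; rewrite eq_sym ne orbC.
- move=> u v /= /andP [ne h]; split=> //.
  by case/orP: h => [/Fint | /Fint /inter_sym].
- move=> u v [ne int].
  have sub1 : forall a b, Erel F1 a b -> stepF F a b.
    by move=> a b [h | h]; right; [left | right]; rewrite !in_setU h.
  have sub2 : forall a b, Erel F2 a b -> stepF F a b.
    by move=> a b [h | h]; right; [left | right]; rewrite !in_setU h ?orbT.
  have symS : forall a b, stepF F a b -> stepF F b a.
    by move=> a b [-> | [h | h]]; [left | right; right | right; left].
  have gen : forall E, (forall a b, E a b -> stepF F a b) -> forall s x,
      walk3 E s x -> exists a b, [/\ stepF F s a, stepF F a b & stepF F b x].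
    move=> E sub s x [a [b [e1 e2 e3]]]; exists a, b; split.
    + by case: e1 => [-> | /sub]; [left | ].
    + by case: e2 => [-> | /sub]; [left | ].
    + by case: e3 => [-> | /sub]; [left | ].
  have fin : (exists a b, [/\ stepF F u a, stepF F a b & stepF F b v]) ->
     exists s : seq V, [/\ path [rel i j | (i != j) && ((j \in F i) || (i \in F j))] u s,
     last u s = v & (size s <= 3)%nat].
    by case=> a [b [s1 s2 s3]]; exact: walk_path s1 s2 s3.
  apply: fin.
  case Eu: (O u) int => [x1 x2 y | cu]; case Ev: (O v) => [x1' x2' y' | cv] int.
  + case: (int_HH Eu Ev ltac:(by rewrite Eu Ev)) => h.
    * exact: gen sub2 _ _ (w2 _ _ h).
    * have [a [b [s1 s2 s3]]] := gen _ sub2 _ _ (w2 _ _ h).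
      by exists b, a; split; apply: symS.
  + exact: gen sub1 _ _ (w1 _ _ (int_HV Eu Ev ltac:(by rewrite Eu Ev))).
  + have [a [b [s1 s2 s3]]] := gen _ sub1 _ _ (w1 _ _ (int_HV Ev Eu
       (inter_sym (ltac:(by rewrite Eu Ev) : intersect (O u) (O v))))).
    by exists b, a; split; apply: symS.
  + case: int => p [/= e1 e2].
    have eVS : VS u = VS v.
      apply/setP => j; rewrite !inE Eu Ev /=.
      case: (isVl (O j)) => //=.
      by apply/idP/idP => /pbP ->; apply/pbP; rewrite -e1 -e2.
    have vu : isVl (O u) by rewrite Eu.
    have vv : isVl (O v) by rewrite Ev.
    have ruv : rep u = rep v.
      rewrite /rep eVS; case: pickP => [//|H].
      by move: (H v); rewrite inE vv /=; case/negP; apply/pbP.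
    exists (rep u), v; split.
    * by rewrite /stepF; right; left; rewrite /F !in_setU /F3 vu inE eqxx !orbT.
    * by rewrite /stepF; right; right; rewrite /F !in_setU /F3 vv inE ruv eqxx !orbT.
    * by left.
- rewrite /num_edges.
  set T1 := [set p : V * V | p.2 \in F p.1].
  have cT1 : (#|T1| <= 13 * n)%nat.
    have -> : #|T1| = (\sum_i #|F i|)%nat.
      rewrite -sum1_card.
      rewrite (eq_bigl (fun p : V * V => true && (p.2 \in F p.1))); last first.
        by move=> p; rewrite inE.
      rewrite -(pair_big_dep (fun _ => true) (fun i j => j \in F i) (fun _ _ => 1%nat)).
      by apply: eq_bigr => i _; rewrite sum1_card.
    apply: leq_trans (@leq_sum _ (index_enum V) xpredT (fun i => #|F i|) (fun _ => 13%nat) (fun i _ => cF i)) _.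
    by rewrite sum_nat_const card_ord mulnC.
  have cT2 : (#|[set (p.2, p.1) | p in T1]| <= 13 * n)%nat :=
    leq_trans (leq_imset_card _ _) cT1.
  have sub : [set p : V * V | [rel i j | (i != j) && ((j \in F i) || (i \in F j))] p.1 p.2
              && (p.1 < p.2)%nat] \subset T1 :|: [set (p.2, p.1) | p in T1].
    apply/subsetP => p; rewrite inE /= => /andP [/andP [_ /orP [h | h]] _].
      by rewrite in_setU inE h.
    rewrite in_setU; apply/orP; right; apply/imsetP; exists (p.2, p.1).
      by rewrite inE /= h.
    by case: p {h}.
  apply: leq_trans (subset_leq_card sub) _.
  apply: leq_trans (leq_card_setU _ _).1 _.
  have -> : (26 * n = 13 * n + 13 * n)%nat by rewrite -mulnDl.
  exact: leq_add cT1 cT2.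
Qed.

End Main.


End Helpers.

Theorem lemma18 :
  exists C : nat, forall (n : nat) (O : 'I_n -> obj),
    exists H : rel 'I_n,
      is_hop_spanner (inter_graph O) H 3 /\ num_edges H <= C * n.
Proof.
by exists 26 => n O; apply: spanner_ex.
Qed.
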